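(* Let $r\ge 3$ and let $G$ be a connected $r$-regular graph. Let $G'$ be the graph with vertex set $V(G)$ in which two distinct vertices are adjacent iff they have a common neighbor in $G$. If $G'$ has a connected component that is a complete graph on $r(r-1)+1$ vertices, then $G$ is the incidence graph of a projective plane of order $r-1$.
   Context: All graphs are finite and simple. A projective plane of order $q$ consists of $q^2+q+1$ points and $q^2+q+1$ lines with an incidence relation such that every line is incident with exactly $q+1$ points, every point with exactly $q+1$ lines, any two distinct points lie on exactly one common line, and any two distinct lines share exactly one common point. Its incidence graph is the bipartite graph whose vertices are the points and the lines, a point being adjacent to a line iff they are incident. *)

(* Defs.v *)
From mathcomp Require Import all_boot.
Set Implicit Arguments. Unset Strict Implicit. Unset Printing Implicit Defensive.

Definition simple_graph (T : finType) (e : rel T) : Prop :=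
  symmetric e /\ irreflexive e.

Definition connected_graph (T : finType) (e : rel T) : Prop :=
  forall x y : T, connect e x y.

Definition regular (T : finType) (e : rel T) (r : nat) : Prop :=
  forall x : T, #|[set y | e x y]| = r.

Definition common_nbr_graph (T : finType) (e : rel T) : rel T :=
  fun x y => (x != y) && [exists z, e x z && e z y].

Definition component (T : finType) (e : rel T) (x : T) : {set T} :=
  [set y | connect e x y].

Definition projective_plane (P L : finType) (I : P -> L -> bool) (q : nat) : Prop :=
  #|P| = q ^ 2 + q + 1 /\ #|L| = q ^ 2 + q + 1 /\
  [/\ forall l : L, #|[set p | I p l]| = q.+1,
      forall p : P, #|[set l | I p l]| = q.+1,
      forall p1 p2 : P, p1 != p2 -> #|[set l | I p1 l && I p2 l]| = 1
    & forall l1 l2 : L, l1 != l2 -> #|[set p | I p l1 && I p l2]| = 1].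

Definition incidence_graph (P L : finType) (I : P -> L -> bool) : rel (P + L) :=
  fun u v => match u, v with
             | inl p, inr l => I p l
             | inr l, inl p => I p l
             | _, _ => false
             end.

Definition graph_iso (T U : finType) (e : rel T) (e' : rel U) : Prop :=
  exists f : T -> U, bijective f /\ forall x y : T, e x y = e' (f x) (f y).

(* Main.v *)
Require Import Defs.
From mathcomp Require Import all_boot all_algebra zify ring.
Set Implicit Arguments. Unset Strict Implicit. Unset Printing Implicit Defensive.

Lemma sumb (T : finType) (P : pred T) : \sum_z (P z : nat) = #|[set z | P z]|.
Proof. rewrite -sum1dep_card [RHS]big_mkcond; apply: eq_bigr => z _; by case: (P z). Qed.

Lemma card1_uniq (T : finType) (A : pred T) z0 : A z0 -> (forall z, A z -> z = z0) ->
  #|[set x | A x]| = 1.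
Proof.
move=> Az0 H; rewrite (_ : [set x | A x] = [set z0]) ?cards1 //.
by apply/setP => z; rewrite !inE; apply/idP/eqP => [/H|->].
Qed.

Lemma card_sub (T : finType) (A : {set T}) (Q : pred T) :
  #|[set p : {x : T | x \in A} | Q (val p)]| = #|[set x | (x \in A) && Q x]|.
Proof.
rewrite -(card_imset _ val_inj); apply: eq_card => x; rewrite inE.
apply/imsetP/andP => [[p + ->]|[xA Qx]]; first by rewrite inE => Qp; split => //; exact: valP.
by exists (exist _ x xA); rewrite ?inE.
Qed.

Section G.
Variables (T : finType) (e : rel T) (r : nat).
Hypothesis esym : symmetric e.
Hypothesis eirr : irreflexive e.
Hypothesis reg : regular e r.
Hypothesis r3 : 2 < r.

Definition W u := [set p : T * T | [&& e u p.1, e p.1 p.2 & p.2 != u]].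
Definition S u := [set p.2 | p in W u].

Lemma cardN z u : e z u -> #|[set y | e z y && (y != u)]| = r - 1.
Proof.
move=> ezu; have := cardsD1 u [set y | e z y]; rewrite reg inE ezu.
move=> ->; rewrite add1n subSS subn0; apply: eq_card => y; rewrite !inE andbC.
by [].
Qed.

Lemma cardW u : #|W u| = r * (r - 1).
Proof.
rewrite -sum1_card.
rewrite (eq_bigl (fun p : T*T => e u p.1 && (e p.1 p.2 && (p.2 != u)))); last by move=> p; rewrite inE.
rewrite -(pair_big_dep (fun z => e u z) (fun z y => e z y && (y != u)) (fun _ _ => 1)) /=.
rewrite (eq_bigr (fun _ => r - 1)); last first.
  by move=> z ez; rewrite sum1dep_card cardN // esym.
rewrite -(reg u) -sum_nat_const; apply: eq_bigl => z; by rewrite inE.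
Qed.

Lemma inS u y : (y \in S u) = (y != u) && [exists z, e u z && e z y].
Proof.
apply/imsetP/andP.
  case=> [[z y'] + ->]; rewrite inE /= => /and3P[euz ezy yu]; split => //.
  by apply/existsP; exists z; rewrite euz.
case=> yu /existsP[z /andP[euz ezy]]; exists (z, y) => //.
by rewrite inE /= euz ezy.
Qed.

Variable C : {set T}.
Hypothesis cardC : #|C| = r * (r - 1) + 1.
Hypothesis HC : {in C &, forall y z, y != z -> common_nbr_graph e y z}.
Hypothesis Hcl : forall u v, u \in C -> common_nbr_graph e u v -> v \in C.

Lemma SC u : u \in C -> S u = C :\ u.
Proof.
move=> uC; apply/setP => y; rewrite inS in_setD1.
case yu: (y != u) => //=; apply/idP/idP.
  by move=> ex; apply: (Hcl uC); rewrite /common_nbr_graph eq_sym yu ex.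
move=> yC; have: u != y by rewrite eq_sym yu.
by move/(HC uC yC)/andP=> [].
Qed.

Lemma injW u : u \in C -> {in W u &, injective (fun p : T * T => p.2)}.
Proof.
move=> uC; apply/imset_injP; rewrite cardW.
have -> : [set p.2 | p in W u] = S u by [].
rewrite SC //; apply/eqP; move: cardC; rewrite (cardsD1 u C) uC; lia.
Qed.

Lemma uniq_mid u z1 z2 y : u \in C -> e u z1 -> e u z2 -> e z1 y -> e z2 y ->
  y != u -> z1 = z2.
Proof.
move=> uC e1 e2 e1y e2y yu.
have := injW uC (x := (z1, y)) (y := (z2, y)).
by rewrite !inE /= e1 e2 e1y e2y yu => /(_ isT isT erefl) [].
Qed.

Definition D := [set w | [exists u in C, e u w]].

Lemma CD u w : u \in C -> e u w -> w \in D.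
Proof. by move=> uC euw; rewrite inE; apply/existsP; exists u; rewrite uC. Qed.

Lemma DC w y : w \in D -> e w y -> y \in C.
Proof.
rewrite inE => /existsP[u /andP[uC euw]] ewy.
case: (eqVneq y u) => [->//|yu]; apply: (Hcl uC).
by rewrite /common_nbr_graph eq_sym yu; apply/existsP; exists w; rewrite euw.
Qed.

Hypothesis conn : connected_graph e.

Lemma all_in (X : {set T}) a : a \in X ->
  (forall x y, e x y -> x \in X -> y \in X) -> forall y, y \in X.
Proof.
move=> aX H y; have cl : closed e X by apply: (intro_closed (sym_connect_sym esym)).
by rewrite -(closed_connect cl (conn a y)).
Qed.

Lemma friend_case a : a \in C -> a \in D ->
  (forall u v, u != v -> #|[set z | e u z && e z v]| = 1) /\ #|T| = r * (r - 1) + 1.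
Proof.
move=> aC aD.
have allC : forall y, y \in C.
  move=> y; have : y \in C :&: D.
    apply: (all_in (a := a)); first by rewrite inE aC.
    by move=> x z exz; rewrite in_setI => /andP[xC xD]; rewrite in_setI (DC xD exz) (CD xC exz).
  by rewrite inE => /andP[].
split; last first.
  by rewrite -cardC; apply: eq_card => y; rewrite allC.
move=> u v uv.
have: u != v by [].
move/(HC (allC u) (allC v)) => /andP[_ /existsP[z0 /andP[e1 e2]]].
rewrite (_ : [set z | e u z && e z v] = [set z0]) ?cards1 //.
apply/setP => z; rewrite !inE; apply/idP/eqP => [/andP[euz ezv]|->]; last by rewrite e1 e2.
by apply: (uniq_mid (allC u) euz e1 ezv e2); rewrite eq_sym.
Qed.

Lemma sumin (A : {set T}) (F : T -> bool) : (forall x, F x -> x \in A) ->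
  \sum_(x in A) (F x : nat) = #|[set x | F x]|.
Proof.
move=> H; rewrite big_mkcond -sumb; apply: eq_bigr => x _.
by case Fx: (F x) =>/=; [rewrite (H x Fx) | case: (x \in A)].
Qed.

Hypothesis disj : forall a, a \in C -> a \notin D.

Lemma C0 : exists a, a \in C.
Proof. by apply/set0Pn; rewrite -card_gt0 cardC addn1. Qed.

Lemma allCD y : (y \in C) || (y \in D).
Proof.
have [a aC] := C0.
have : y \in C :|: D.
  apply: (all_in (a := a)); first by rewrite inE aC.
  move=> x z exz; rewrite !in_setU => /orP[xC|xD].
    by rewrite (CD xC exz) orbT.
  by rewrite (DC xD exz).
by rewrite in_setU.
Qed.

Lemma cardD : #|D| = #|C|.
Proof.
have pr : 0 < r by apply: ltnW; apply: ltnW.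
apply/eqP; rewrite -(eqn_pmul2r pr) -!sum_nat_const eq_sym.
rewrite (eq_bigr (fun u => \sum_(w in D) (e u w : nat))); last first.
  by move=> u uC; rewrite sumin ?reg // => w /(CD uC).
rewrite exchange_big; apply/eqP; apply: eq_bigr => w wD.
rewrite sumin; last by move=> u; rewrite esym => /(DC wD).
by rewrite -(reg w); apply: eq_card => u; rewrite !inE esym.
Qed.

Lemma SD w : w \in D -> S w = D :\ w.
Proof.
move=> wD; apply/eqP; rewrite eqEcard; apply/andP; split.
  apply/subsetP => y; rewrite inS in_setD1 => /andP[-> /existsP[z /andP[ewz ezy]]].
  exact: (CD (DC wD ewz) ezy).
have -> : #|S w| = #|W w|.
  apply/eqP/imset_injP => [[z1 y1] [z2 y2]]; rewrite !inE /= => /and3P[e1 e1y yw] /and3P[e2 e2y _] /= E.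
  subst y2; case: (eqVneq z1 z2) => [->//|z12].
  have ez1w : e z1 w by rewrite esym. have ey1z2 : e y1 z2 by rewrite esym.
  by have := uniq_mid (DC wD e1) ez1w e1y e2 ey1z2; rewrite eq_sym z12 => /(_ isT) wy; rewrite wy eqxx in yw.
rewrite cardW; move: (cardsD1 w D); rewrite wD cardD cardC; lia.
Qed.

Lemma plane : exists (P L : finType) (I : P -> L -> bool),
    projective_plane I (r - 1) /\ graph_iso e (incidence_graph I).
Proof.
have [a aC] := C0.
have [l0 l0D] : exists w, w \in D.
  have : 0 < #|[set y | e a y]| by rewrite reg; apply: ltnW; apply: ltnW.
  rewrite card_gt0 => /set0Pn[y]; rewrite inE => eay; exists y; exact: CD aC eay.
exists {x : T | x \in C}, {x : T | x \in D}, (fun p l => e (val p) (val l)).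
have DnC : forall l : {x : T | x \in D}, (val l \in C) = false.
  by move=> l; apply/negbTE/negP => /disj; rewrite (valP l).
split.
  rewrite /projective_plane !card_sig.
  have -> : #|[pred x in C]| = #|C| by [].
  have -> : #|[pred x in D]| = #|D| by [].
  rewrite cardD cardC; split; first lia; split; first lia; split.
  - move=> l; rewrite (card_sub _ (fun x => e x (val l))).
    suff -> : #|[set x | (x \in C) && e x (val l)]| = r by lia.
    rewrite -(reg (val l)); apply: eq_card => x; rewrite !inE esym; apply/andP/idP => [[]//|exl]; split => //.
    exact: (DC (valP l) exl).
  - move=> p; rewrite (card_sub _ (fun x => e (val p) x)).
    suff -> : #|[set x | (x \in D) && e (val p) x]| = r by lia.
    rewrite -(reg (val p)); apply: eq_card => x; rewrite !inE; apply/andP/idP => [[]//|epx]; split => //.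
    by have := CD (valP p) epx; rewrite inE.
  - move=> p1 p2 p12; rewrite (card_sub _ (fun x => e (val p1) x && e (val p2) x)).
    have uv : val p1 != val p2 by rewrite val_eqE.
    have /andP[_ /existsP[z0 /andP[e1 e2]]] := HC (valP p1) (valP p2) uv.
    apply: (card1_uniq (z0 := z0)); first by rewrite /= (CD (valP p1) e1) e1 esym e2.
    move=> z /and3P[_ e1z e2z].
    apply: (uniq_mid (valP p1) e1z e1 (_ : e z (val p2)) (_ : e z0 (val p2))).
    - by rewrite esym.
    - by [].
    - by rewrite eq_sym.
  - move=> l1 l2 l12; rewrite (card_sub _ (fun x => e x (val l1) && e x (val l2))).
    have uv : val l2 != val l1 by rewrite val_eqE eq_sym.
    have : val l2 \in S (val l1) by rewrite SD ?(valP l1) // in_setD1 uv (valP l2).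
    rewrite inS => /andP[_ /existsP[z0 /andP[e1 e2]]].
    have z0C := DC (valP l1) e1.
    apply: (card1_uniq (z0 := z0)); first by rewrite /= z0C esym e1 e2.
    move=> z /and3P[zC ez1 ez2]; apply/eqP; apply/negP => /negP zz0.
    have := uniq_mid zC ez1 ez2 (_ : e (val l1) z0) (_ : e (val l2) z0) (_ : z0 != z).
    rewrite e1 esym e2 eq_sym zz0 => /(_ isT isT isT) /eqP.
    by rewrite eq_sym (negbTE uv).
pose f (x : T) : {x : T | x \in C} + {x : T | x \in D} :=
  if insub x is Some p then inl p else inr (insubd (exist _ l0 l0D) x).
pose g (s : {x : T | x \in C} + {x : T | x \in D}) : T :=
  match s with inl p => val p | inr l => val l end.
exists f; split.
  exists g.
    move=> x; rewrite /f /g; case: insubP => [p _ <- //|xC] /=.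
    by rewrite insubdK //; have := allCD x; rewrite (negbTE xC).
  case=> [p|l]; rewrite /f /g /=; first by rewrite valK.
  by rewrite insubF ?DnC // valKd.
move=> x y; rewrite /f; case: insubP => [p pC <-| xnC]; case: insubP => [q qC <-| ynC] /=.
- apply/negbTE/negP => exy; have := disj (valP q); rewrite (CD (valP p) exy) //.
- by rewrite insubdK //; have := allCD y; rewrite (negbTE ynC).
- rewrite insubdK; first by rewrite esym.
  by have := allCD x; rewrite (negbTE xnC).
- apply/negbTE/negP => exy.
  have xD : x \in D by have := allCD x; rewrite (negbTE xnC).
  by rewrite (DC xD exy) in ynC.
Qed.

End G.

Section Alg.
Import GRing.Theory.
Local Open Scope ring_scope.
Lemma tr_sq0 (F : fieldType) m (N : 'M[F]_m) : N *m N = 0 -> \tr N = 0.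
Proof.
move=> NN.
have E := mulmx_ebase N.
set L := col_ebase N in E; set U := row_ebase N in E; set P := pid_mx (\rank N) in E.
have PP : P *m P = P by rewrite pid_mx_id ?rank_leq_col.
have Z : P *m (U *m L) *m P = 0.
  have : L *m (P *m (U *m L) *m P) *m U = 0 by rewrite -NN -E !mulmxA.
  move/(congr1 (fun M => invmx L *m M *m invmx U)).
  by rewrite mulmx0 mul0mx -mulmxA mulmxK ?row_ebase_unit // mulKmx ?col_ebase_unit.
rewrite -E -mulmxA mxtrace_mulC -mulmxA -{1}PP -mulmxA mxtrace_mulC.
by rewrite Z; apply: mxtrace0.
Qed.
Lemma bool_exp (R : comRingType) (a b : bool) :
  (a%:R - 1) * (b%:R - 1) = (a && b)%:R - a%:R - b%:R + 1 :> R.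
Proof. by case: a; case: b => /=; ring. Qed.

Lemma sumT (R : comRingType) (T : finType) (F : T -> R) :
  \sum_(i < #|T|) F (enum_val i) = \sum_z F z.
Proof. by rewrite -big_enum_val. Qed.

Lemma sumbR (R : comRingType) (T : finType) (P : pred T) :
  \sum_z (P z)%:R = #|[set z | P z]|%:R :> R.
Proof. by rewrite -sumb natr_sum. Qed.

Lemma no_friend (T : finType) (e : rel T) (r : nat) :
  symmetric e -> irreflexive e -> regular e r -> (2 < r)%N ->
  #|T| = (r * (r - 1) + 1)%N ->
  (forall u v, u != v -> #|[set z | e u z && e z v]| = 1%N) -> False.
Proof.
move=> esym eirr reg r3 cT H1.
set p := pdiv (r - 1).
have pp : prime p by apply: pdiv_prime; rewrite ltn_subRL.
have pd : (p %| r - 1)%N := pdiv_dvd _.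
have F0 : ((r - 1)%:R : 'F_p) = 0.
  by rewrite -(divnK pd) natrM pchar_Fp_0 // mulr0.
have Fr : (r%:R : 'F_p) = 1.
  have -> : r = ((r - 1) + 1)%N by rewrite subnK // ltnW // ltnW.
  by rewrite natrD F0 add0r.
have Fn : (#|T|%:R : 'F_p) = 1 by rewrite cT natrD natrM F0 mulr0 add0r.
pose N : 'M['F_p]_#|T| := \matrix_(i, j) ((e (enum_val i) (enum_val j))%:R - 1).
have NN : N *m N = 0.
  apply/matrixP => i j; rewrite !mxE.
  under eq_bigr do rewrite !mxE.
  rewrite (sumT (fun z => ((e (enum_val i) z)%:R - 1) * ((e z (enum_val j))%:R - 1))).
  under eq_bigr do rewrite bool_exp.
  rewrite big_split /= !sumrB !sumbR sumr_const.
  have -> : #|[set z | e (enum_val i) z]| = r by [].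
  have -> : #|[set z | e z (enum_val j)]| = r.
    by rewrite -(reg (enum_val j)); apply: eq_card => z; rewrite !inE esym.
  have -> : (#|[set z | e (enum_val i) z && e z (enum_val j)]|%:R : 'F_p) = 1.
    case: (eqVneq (enum_val i) (enum_val j)) => [<-|/H1 -> //].
    have -> : #|[set z | e (enum_val i) z && e z (enum_val i)]| = r.
      by rewrite -(reg (enum_val i)); apply: eq_card => z; rewrite !inE [e z _]esym andbb.
    exact: Fr.
  rewrite Fr.
  have -> : (1 : 'F_p) *+ #|T| = 1 by rewrite Fn.
  by rewrite subrr sub0r addNr.
have := tr_sq0 NN.
rewrite /mxtrace.
under eq_bigr do rewrite mxE eirr.
rewrite sumr_const card_ord sub0r mulNrn Fn => /eqP.
by rewrite oppr_eq0 oner_eq0.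
Qed.
End Alg.

Theorem mainTheorem2 (T : finType) (e : rel T) (r : nat) :
  3 <= r ->
  simple_graph e -> connected_graph e -> regular e r ->
  (exists x : T,
      #|component (common_nbr_graph e) x| = r * (r - 1) + 1 /\
      {in component (common_nbr_graph e) x &,
         forall y z, y != z -> common_nbr_graph e y z}) ->
  exists (P L : finType) (I : P -> L -> bool),
    projective_plane I (r - 1) /\ graph_iso e (incidence_graph I).
Proof.
move=> r3 [esym eirr] conn reg [x [cC HC]].
have Hcl : forall u v, u \in component (common_nbr_graph e) x ->
    common_nbr_graph e u v -> v \in component (common_nbr_graph e) x.
  by move=> u v; rewrite !inE => xu uv; exact: connect_trans xu (connect1 uv).
case: (boolP [exists a, (a \in component (common_nbr_graph e) x) &&
                         (a \in D e (component (common_nbr_graph e) x))]).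
  case/existsP=> a /andP[aC aD].
  have [H1 cT] := friend_case esym reg r3 cC HC Hcl conn aC aD.
  by case: (no_friend esym eirr reg r3 cT H1).
move=> nd; apply: (plane esym reg r3 cC HC Hcl conn).
move=> a aC; apply/negP => aD; move/existsP: nd; apply; exists a; rewrite aC aD.
by [].
Qed.
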